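(* Let $Q$ be a quiver whose underlying graph is a Dynkin diagram of type $A$, $D$ or $E$, with vertex set $I$. Let $A=\Pi_Q$ be its preprojective algebra over $\mathbb{C}$, graded by path length. Let $\theta_0\in HH^1(A)$ be the class of the derivation $D:A\to A$ determined by $D(e_i)=0$ for $i\in I$, $D(a)=0$ for $a\in Q$, and $D(a^* )=a^*$ for $a^*\in Q^*$. Equivalently, $D(b)=s(b)\,b$ for every path $b$, where $s(b)$ is the number of arrows of $b$ that lie in $Q^*$. Then for every $i\ge 0$ and every homogeneous $x\in HH_i(A)$ of degree $\deg(x)$, the Lie derivative satisfies $$\mathcal{L}_{\theta_0}(x)=\frac{\deg(x)}{2}\,x .$$
   Context: Let $Q$ be a quiver. Its double $\bar Q=Q\cup Q^*$ is obtained by adjoining, for each arrow $a\in Q$, a reversed arrow $a^*$. The path algebra $\mathbb{C}\bar Q$ has as basis all paths in $\bar Q$, including the trivial paths $e_i$ for $i\in I$. The product of two paths is their concatenation when they are compatible, and $0$ otherwise. The preprojective algebra is $\Pi_Q=\mathbb{C}\bar Q/\big(\sum_{a\in Q}(aa^*-a^*a)\big)$. It is graded by path length, with arrows in degree $1$. For $Q$ of ADE type it is finite dimensional. The defining relation is homogeneous in the number of $Q^*$-arrows, so $D$ is a well-defined derivation. $HH^\bullet(A)$ and $HH_\bullet(A)$ denote Hochschild cohomology and Hochschild homology of $A$ with coefficients in $A$. $HH_\bullet(A)$ carries the internal grading induced from the grading of $A$: a chain $a_0\otimes a_1\otimes\cdots\otimes a_n$ of homogeneous elements has degree $\sum_j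 \deg a_j$. For a derivation $D$ (a Hochschild $1$-cocycle), the Lie derivative acts on Hochschild chains by $\mathcal{L}_D(a_0\otimes\cdots\otimes a_n)=\sum_{j=0}^n a_0\otimes\cdots\otimes D(a_j)\otimes\cdots\otimes a_n$. This induces the action $\mathcal{L}_{\theta_0}$ on $HH_\bullet(A)$, which is part of the standard calculus structure (Daletski–Gelfand–Tsygan) on the pair $(HH^\bullet(A),HH_\bullet(A))$. *)

(* Defs.v *)
From mathcomp Require Import all_boot all_algebra.
From mathcomp Require Import Rstruct.
From mathcomp Require Import complex.
Set Implicit Arguments. Unset Strict Implicit. Unset Printing Implicit Defensive.
Import GRing.Theory.
Local Open Scope ring_scope.

Definition CC : numClosedFieldType := (Rdefinitions.R)[i].

Inductive dynkin_type := TypeA | TypeD | TypeE.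

Definition dynkin_ok (ty : dynkin_type) (n : nat) : bool :=
  match ty with
  | TypeA => 1 <= n
  | TypeD => 4 <= n
  | TypeE => (n == 6) || (n == 7) || (n == 8)
  end%N.

Definition dynkin_edge0 (ty : dynkin_type) (n : nat) (i j : nat) : bool :=
  match ty with
  | TypeA => j == i.+1
  | TypeD => ((j == i.+1) && (j <= n - 2)) || ((i == n - 3) && (j == n - 1))
  | TypeE => ((j == i.+1) && (j <= n - 2)) || ((i == 2) && (j == n - 1))
  end%N.

Definition dynkin_edge (ty : dynkin_type) (n : nat) (i j : 'I_n) : bool :=
  dynkin_edge0 ty n i j || dynkin_edge0 ty n j i.

Section Quiver.
Variables (n : nat) (Arr : finType) (src tgt : Arr -> 'I_n).

(* The underlying (multi)graph of Q is the Dynkin diagram of type ty: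
   after relabelling vertices by a bijection sigma, the number of arrows
   between two vertices (in either direction; loops counted once) is 1
   if they are joined by an edge of the diagram and 0 otherwise. *)
Definition narrows (x y : 'I_n) : nat :=
  #|[pred a : Arr | ((src a == x) && (tgt a == y)) || ((src a == y) && (tgt a == x))]|.

Definition is_ADE_quiver : Prop :=
  exists (ty : dynkin_type) (sigma : 'I_n -> 'I_n),
    [/\ dynkin_ok ty n, bijective sigma &
        forall i j : 'I_n, narrows (sigma i) (sigma j) = nat_of_bool (dynkin_edge ty i j)].

(* inl a = a in Q,  inr a = a^* in Q^* (reversed arrow). *)
Definition darrow := (Arr + Arr)%type.
Definition dsrc (x : darrow) : 'I_n := match x with inl a => src a | inr a => tgt a end.
Definition dtgt (x : darrow) : 'I_n := match x with inl a => tgt a | inr a => src a end.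
Definition is_star (x : darrow) : bool := if x is inr _ then true else false.

(* a path: its starting vertex and its list of arrows, traversed from left
   to right; (i, [::]) is the trivial path e_i *)
Definition dpath := ('I_n * seq darrow)%type.

Fixpoint composable (v : 'I_n) (l : seq darrow) : bool :=
  match l with
  | [::] => true
  | x :: l' => (dsrc x == v) && composable (dtgt x) l'
  end.

Definition valid_path (p : dpath) : bool := composable p.1 p.2.
Definition ptgt (p : dpath) : 'I_n := foldl (fun _ x => dtgt x) p.1 p.2.
Definition plen (p : dpath) : nat := size p.2.
Definition pstar (p : dpath) : nat := count is_star p.2.

(* product of paths in C Qbar: concatenation if compatible, else 0 (None) *)
Definition pmul (p q : dpath) : option dpath :=
  if ptgt p == q.1 then Some (p.1, p.2 ++ q.2) else None.
Definition pmul3 (p q r : dpath) : option dpath := obind (fun x => pmul x r) (pmul p q).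

(* A chain in (C Qbar)^{(x) m} is a formal finite linear combination of
   pure tensors p_0 (x) ... (x) p_{m-1} of paths, represented by a list of
   (coefficient, list of paths); its actual value is given by [coeff]. *)
Definition chain := seq (CC * seq dpath)%type.

Definition coeff (c : chain) (key : seq dpath) : CC :=
  \sum_(x <- c | x.2 == key) x.1.

Definition chain_scale (k : CC) (c : chain) : chain := [seq (k * x.1, x.2) | x <- c].
Definition chain_sub (c c' : chain) : chain := c ++ chain_scale (-1) c'.

Definition valid_chain (m : nat) (c : chain) : bool :=
  all (fun x => (size x.2 == m) && all valid_path x.2) c.

Definition key_deg (l : seq dpath) : nat := \sum_(p <- l) plen p.
Definition homogeneous (d : nat) (c : chain) : bool := all (fun x => key_deg x.2 == d) c.

(* Hochschild boundary on a pure tensor a_0 (x) ... (x) a_m  (m >= 1):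
   sum_{j<m} (-1)^j a_0..(a_j a_{j+1})..a_m + (-1)^m a_m a_0 (x) a_1..a_{m-1};
   zero on C_0. *)
Definition bterm (k : CC) (l : seq dpath) : chain :=
  match l with
  | a0 :: ((_ :: _) as rest) =>
    let m := size rest in
    flatten [seq match pmul (nth a0 l j) (nth a0 l j.+1) with
                 | Some p => [:: ((-1) ^+ j * k, take j l ++ p :: drop j.+2 l)]
                 | None => [::] end | j <- iota 0 m]
    ++ match pmul (last a0 rest) a0 with
       | Some p => [:: ((-1) ^+ m * k, p :: take m.-1 rest)]
       | None => [::] end
  | _ => [::]
  end.

Definition hoch_b (c : chain) : chain := flatten [seq bterm x.1 x.2 | x <- c].

(* Lie derivative L_D for the derivation D(b) = s(b) b:
   L_D(a_0 (x)..(x) a_m) = sum_j a_0 (x)..D(a_j)..(x) a_m. *)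
Definition lieD (c : chain) : chain :=
  [seq ((\sum_(p <- x.2) pstar p)%:R * x.1, x.2) | x <- c].

(* u * rho * v, rho = sum_{a in Q} (a a^* - a^* a), as a combination of paths *)
Definition rho_mul (u v : dpath) : seq (CC * dpath) :=
  flatten [seq (match pmul3 u (src a, [:: inl a; inr a]) v with
                | Some w => [:: (1, w)] | None => [::] end)
               ++ (match pmul3 u (tgt a, [:: inr a; inl a]) v with
                | Some w => [:: (-1, w)] | None => [::] end) | a <- enum Arr].

(* generator (k, j, others, u, v) of the kernel J_m of
   (C Qbar)^{(x) m} -> (Pi_Q)^{(x) m}:
   k * (others_0 (x)..(x) u rho v (in slot j) (x)..(x) others_{m-2}) *)
Definition gen := (CC * nat * seq dpath * dpath * dpath)%type.

Definition gen_chain (g : gen) : chain :=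
  let: (k, j, others, u, v) := g in
  [seq (k * x.1, take j others ++ x.2 :: drop j others) | x <- rho_mul u v].

Definition valid_gen (m : nat) (g : gen) : bool :=
  let: (k, j, others, u, v) := g in
  [&& (j < m)%N, size others == m.-1, all valid_path others, valid_path u & valid_path v].

(* c represents 0 in (Pi_Q)^{(x) m} *)
Definition inJ (m : nat) (c : chain) : Prop :=
  exists G : seq gen, all (valid_gen m) G /\
    forall key, coeff c key = coeff (flatten [seq gen_chain g | g <- G]) key.

End Quiver.

(* Main.v *)
Require Import Defs.
From mathcomp Require Import all_boot all_algebra.
From mathcomp Require Import ring zify.
Set Implicit Arguments. Unset Strict Implicit. Unset Printing Implicit Defensive.
Import GRing.Theory Num.Theory.
Local Open Scope ring_scope.

Section Work.
Variables (n : nat) (Arr : finType) (src tgt : Arr -> 'I_n).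
Local Notation dpath := (dpath n Arr).
Local Notation chain := (chain n Arr).
Local Notation pmul := (pmul src tgt).
Local Notation ptgt := (ptgt src tgt).
Local Notation bterm := (bterm src tgt).
Local Notation hoch_b := (hoch_b src tgt).

Definition pair (X : chain) (psi : seq dpath -> CC) : CC :=
  \sum_(x <- X) x.1 * psi x.2.

Lemma pair_nil psi : pair [::] psi = 0. Proof. by rewrite /pair big_nil. Qed.
Lemma pair_cons x X psi : pair (x :: X) psi = x.1 * psi x.2 + pair X psi.
Proof. by rewrite /pair big_cons. Qed.
Lemma pair_cat X Y psi : pair (X ++ Y) psi = pair X psi + pair Y psi.
Proof. by rewrite /pair big_cat. Qed.
Lemma pair_flatten (T : Type) (F : T -> chain) (s : seq T) psi :
  pair (flatten [seq F y | y <- s]) psi = \sum_(y <- s) pair (F y) psi.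
Proof.
elim: s => [|y s IH] /=; first by rewrite pair_nil big_nil.
by rewrite pair_cat IH big_cons.
Qed.
Lemma pair_map (T : Type) (f : T -> CC * seq dpath) (s : seq T) psi :
  pair [seq f y | y <- s] psi = \sum_(y <- s) (f y).1 * psi (f y).2.
Proof. by rewrite /pair big_map. Qed.
Lemma pair_scale k X psi : pair (chain_scale k X) psi = k * pair X psi.
Proof.
rewrite /chain_scale pair_map /pair mulr_sumr; apply: eq_bigr => x _ /=.
by rewrite mulrA.
Qed.
Lemma pair_sub X Y psi : pair (chain_sub X Y) psi = pair X psi - pair Y psi.
Proof. by rewrite /chain_sub pair_cat pair_scale mulN1r. Qed.
Lemma coeff_pair X key : coeff X key = pair X (fun s => (s == key)%:R).
Proof.
rewrite /coeff /pair big_mkcond; apply: eq_bigr => x _.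
by case: eqP => _; rewrite ?mulr1 ?mulr0.
Qed.
Lemma pair_linsum (T : Type) (r : seq T) (f : T -> seq dpath -> CC) X :
  pair X (fun s => \sum_(i <- r) f i s) = \sum_(i <- r) pair X (f i).
Proof.
rewrite /pair exchange_big /=; apply: eq_bigr => x _; by rewrite mulr_sumr.
Qed.
Lemma pair_linscale k (f : seq dpath -> CC) X :
  pair X (fun s => k * f s) = k * pair X f.
Proof. rewrite /pair mulr_sumr; apply: eq_bigr => x _; by rewrite mulrCA. Qed.
Lemma pair_linadd f g X : pair X (fun s => f s + g s) = pair X f + pair X g.
Proof. by rewrite /pair -big_split; apply: eq_bigr => x _; rewrite mulrDr. Qed.
Lemma eq_pair X f g : (forall x, x \in X -> f x.2 = g x.2) -> pair X f = pair X g.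
Proof.
move=> H; rewrite /pair big_seq_cond [RHS]big_seq_cond.
by apply: eq_bigr => x /andP[xX _]; rewrite H.
Qed.

Lemma sum_delta (T : eqType) (s : seq T) (y : T) (F : T -> CC) :
  uniq s -> y \in s -> \sum_(k <- s) (y == k)%:R * F k = F y.
Proof.
elim: s => // a s IH; rewrite cons_uniq => /andP[ans us]; rewrite inE big_cons.
case: (eqVneq y a) => [->|ne] H.
  rewrite ?eqxx mul1r big1_seq ?addr0 // => k /andP[_ ks].
  have: a != k by apply: contraNneq ans => ->.
  by move/negPf ->; rewrite mul0r.
by rewrite (_ : false%:R = 0 :> CC) // mul0r add0r IH.
Qed.

Lemma pair_keys X psi (s : seq (seq dpath)) : uniq s ->
  {subset [seq x.2 | x <- X] <= s} ->
  pair X psi = \sum_(k <- s) coeff X k * psi k.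
Proof.
move=> us sub.
have -> : \sum_(k <- s) coeff X k * psi k =
          \sum_(k <- s) \sum_(x <- X) x.1 * ((x.2 == k)%:R * psi k).
  apply: eq_bigr => k _; rewrite coeff_pair /pair mulr_suml.
  by apply: eq_bigr => x _; rewrite mulrA.
rewrite exchange_big /pair big_seq_cond [RHS]big_seq_cond.
apply: eq_bigr => x /andP[xX _].
rewrite -mulr_sumr; congr (_ * _).
have xs : x.2 \in s by apply: sub; apply: map_f.
by rewrite sum_delta.
Qed.

Lemma pair_coeff X Y psi : (forall key, coeff X key = coeff Y key) ->
  pair X psi = pair Y psi.
Proof.
move=> H.
set s := undup ([seq x.2 | x <- X] ++ [seq x.2 | x <- Y]).
rewrite (@pair_keys X psi s) ?undup_uniq //; last first.
  by move=> k kX; rewrite mem_undup mem_cat kX.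
rewrite (@pair_keys Y psi s) ?undup_uniq //; last first.
  by move=> k kY; rewrite mem_undup mem_cat kY orbT.
by apply: eq_bigr => k _; rewrite H.
Qed.


Definition ofun (o : option dpath) (f : dpath -> CC) : CC :=
  if o is Some p then f p else 0.
Definition fterm psi (l : seq dpath) (j : nat) : CC :=
  if l is a0 :: _ then
    ofun (pmul (nth a0 l j) (nth a0 l j.+1)) (fun x => psi (take j l ++ x :: drop j.+2 l))
  else 0.
Definition wterm psi (l : seq dpath) : CC :=
  if l is a0 :: rest then
    ofun (pmul (last a0 rest) a0) (fun x => psi (x :: take (size rest).-1 rest))
  else 0.
Definition SB psi l := pair (bterm 1 l) psi.

Lemma bterm_cons2 k a0 a1 r : bterm k (a0 :: a1 :: r) =
  flatten [seq match pmul (nth a0 (a0::a1::r) j) (nth a0 (a0::a1::r) j.+1) with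
               | Some p => [:: ((-1)^+j * k, take j (a0::a1::r) ++ p :: drop j.+2 (a0::a1::r))]
               | None => [::] end | j <- iota 0 (size (a1::r))]
  ++ match pmul (last a0 (a1::r)) a0 with
     | Some p => [:: ((-1)^+(size (a1::r)) * k, p :: take (size (a1::r)).-1 (a1::r))]
     | None => [::] end.
Proof. by []. Qed.

Lemma pair_bterm_exp k a0 r psi : (0 < size r)%N ->
  pair (bterm k (a0 :: r)) psi =
  k * (\sum_(0 <= j < size r) (-1)^+j * fterm psi (a0 :: r) j
       + (-1)^+(size r) * wterm psi (a0 :: r)).
Proof.
case: r => // a1 r _; rewrite bterm_cons2 pair_cat pair_flatten /index_iota subn0.
rewrite mulrDr mulr_sumr; congr (_ + _).
  apply: eq_bigr => j _.
  change (fterm psi (a0::a1::r) j) with (ofun (pmul (nth a0 (a0::a1::r) j)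
    (nth a0 (a0::a1::r) j.+1)) (fun x => psi (take j (a0::a1::r) ++ x :: drop j.+2 (a0::a1::r)))).
  case: (pmul _ _) => [p|]; rewrite ?pair_cons ?pair_nil /ofun /=.
    by rewrite addr0 mulrCA mulrA.
  by rewrite !mulr0.
change (wterm psi (a0::a1::r)) with (ofun (pmul (last a0 (a1::r)) a0)
   (fun x => psi (x :: take (size (a1::r)).-1 (a1::r)))).
case: (pmul _ _) => [p|]; rewrite ?pair_cons ?pair_nil /ofun /=.
  by rewrite addr0 mulrCA mulrA.
by rewrite !mulr0.
Qed.

Lemma pair_bterm_small k l psi : (size l <= 1)%N -> pair (bterm k l) psi = 0.
Proof. by case: l => [|a [|b l]] //= _; rewrite pair_nil. Qed.

Lemma pair_bterm k l psi : pair (bterm k l) psi = k * SB psi l.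
Proof.
rewrite /SB; case: l => [|a0 r]; first by rewrite !pair_bterm_small ?mulr0.
case: r => [|a1 r]; first by rewrite !pair_bterm_small ?mulr0.
by rewrite !pair_bterm_exp // mul1r.
Qed.

Lemma SB_exp psi a0 r : (0 < size r)%N ->
  SB psi (a0 :: r) = \sum_(0 <= j < size r) (-1)^+j * fterm psi (a0 :: r) j
       + (-1)^+(size r) * wterm psi (a0 :: r).
Proof. by move=> h; rewrite /SB pair_bterm_exp // mul1r. Qed.

Lemma SB_small psi l : (size l <= 1)%N -> SB psi l = 0.
Proof. exact: pair_bterm_small. Qed.

Lemma pair_hoch X psi : pair (hoch_b X) psi = pair X (SB psi).
Proof.
rewrite /hoch_b pair_flatten [RHS]/pair; apply: eq_bigr => x _.
exact: pair_bterm.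
Qed.

Lemma SB_linsum (T : Type) (r : seq T) (f : T -> seq dpath -> CC) l :
  SB (fun s => \sum_(i <- r) f i s) l = \sum_(i <- r) SB (f i) l.
Proof. exact: pair_linsum. Qed.
Lemma SB_linscale k f l : SB (fun s => k * f s) l = k * SB f l.
Proof. exact: pair_linscale. Qed.


Definition ins (q : nat) (x : dpath) (l : seq dpath) := take q l ++ x :: drop q l.
Definition ev (v : 'I_n) : dpath := (v, [::]).

Lemma ins_cons q x y B : ins q.+1 x (y :: B) = y :: ins q x B.
Proof. by []. Qed.
Lemma ins0 x l : ins 0 x l = x :: l.
Proof. by rewrite /ins take0 drop0. Qed.
Lemma size_ins q x l : size (ins q x l) = (size l).+1.
Proof. rewrite /ins size_cat /= size_take size_drop; case: ltnP => h; lia. Qed.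
Lemma ins_catl q x A B : (q <= size A)%N -> ins q x (A ++ B) = ins q x A ++ B.
Proof.
elim: A q => [|a A IH] [|q] //= h; rewrite ?ins0 //.
by rewrite !ins_cons IH.
Qed.
Lemma ins_catr q x A y B : (size A < q)%N ->
  ins q x (A ++ y :: B) = A ++ y :: ins (q - size A).-1 x B.
Proof.
elim: A q => [|a A IH] [|q] h //.
by rewrite cat_cons ins_cons (IH q h) /= subSS.
Qed.
Lemma ins_end x l : ins (size l) x l = l ++ [:: x].
Proof. by rewrite /ins take_size drop_size. Qed.

Lemma eq_ofun o f g : (forall y, f y = g y) -> ofun o f = ofun o g.
Proof. by case: o => //= p ->. Qed.

Lemma decomp2 (l : seq dpath) j (d : dpath) : (j.+1 < size l)%N ->
  exists A a b B, [/\ l = A ++ a :: b :: B, size A = j, nth d l j = a & nth d l j.+1 = b].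
Proof.
move=> h; exists (take j l), (nth d l j), (nth d l j.+1), (drop j.+2 l); split => //.
- by rewrite -(drop_nth d h) -(drop_nth d (ltnW h)) cat_take_drop.
- by rewrite size_take (ltn_trans (ltnSn j) h).
Qed.
Lemma decomp1 (l : seq dpath) j (d : dpath) : (j < size l)%N ->
  exists A a B, [/\ l = A ++ a :: B, size A = j & nth d l j = a].
Proof.
move=> h; exists (take j l), (nth d l j), (drop j.+1 l); split => //.
- by rewrite -(drop_nth d h) cat_take_drop.
- by rewrite size_take h.
Qed.

Lemma fterm_def psi d l j : (j.+1 < size l)%N ->
  fterm psi l j = ofun (pmul (nth d l j) (nth d l j.+1)) (fun x => psi (take j l ++ x :: drop j.+2 l)).
Proof.
case: l => [|a0 l] // h.
change (fterm psi (a0::l) j) with (ofun (pmul (nth a0 (a0::l) j) (nth a0 (a0::l) j.+1))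
   (fun x => psi (take j (a0::l) ++ x :: drop j.+2 (a0::l)))).
rewrite (@set_nth_default _ _ d a0 j) ?(@set_nth_default _ _ d a0 j.+1) //.
exact: ltn_trans (ltnSn j) h.
Qed.

Lemma fterm_cat psi A a b B :
  fterm psi (A ++ a :: b :: B) (size A) = ofun (pmul a b) (fun y => psi (A ++ y :: B)).
Proof.
rewrite (fterm_def _ a); last by rewrite size_cat /=; lia.
have e1 : nth a (A ++ a :: b :: B) (size A) = a by rewrite nth_cat ltnn subnn.
have e2 : nth a (A ++ a :: b :: B) (size A).+1 = b.
  by rewrite nth_cat ltnNge leqnSn /= subSnn.
rewrite e1 e2; apply: eq_ofun => y; congr psi.
rewrite take_size_cat // drop_cat.
have -> : ((size A).+2 < size A)%N = false by lia.
by rewrite -addn2 addnC addnK /= drop0.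
Qed.

Lemma wterm_cons psi a0 rest : wterm psi (a0 :: rest) =
  ofun (pmul (last a0 rest) a0) (fun x => psi (x :: take (size rest).-1 rest)).
Proof. by []. Qed.

Lemma pmul_ev a v : pmul a (ev v) = if ptgt a == v then Some a else None.
Proof. by case: a => a1 a2; rewrite /pmul /ev /= cats0. Qed.
Lemma pmul_ev_l a v : pmul (ev v) a = if v == a.1 then Some a else None.
Proof. case: a => a1 a2; rewrite /pmul /ev /=; change (ptgt (v, [::])) with v; by case: eqP => // ->. Qed.

Lemma ofun_if (b : bool) a f : ofun (if b then Some a else None) f = b%:R * f a.
Proof. by case: b; rewrite /= ?mul1r ?mul0r. Qed.

Lemma P_i psi q x A a b B : (size A < q)%N ->
  fterm psi (ins q.+1 x (A ++ a :: b :: B)) (size A) =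
  fterm (fun s => psi (ins q x s)) (A ++ a :: b :: B) (size A).
Proof.
move=> h; rewrite ins_catr; last by lia.
have -> : (q.+1 - size A).-1 = (q - size A - 1).+1 by lia.
rewrite ins_cons !fterm_cat; apply: eq_ofun => y; congr psi.
rewrite ins_catr //; congr (_ ++ _ :: ins _ _ _); lia.
Qed.

Lemma P_ii psi q v A a B : size A = q ->
  fterm psi (ins q.+1 (ev v) (A ++ a :: B)) (size A) = (ptgt a == v)%:R * psi (A ++ a :: B).
Proof.
move=> h; rewrite ins_catr; last by lia.
have -> : (q.+1 - size A).-1 = 0 by lia.
by rewrite ins0 fterm_cat pmul_ev ofun_if.
Qed.

Lemma P_iii psi q v A a b B : size A = q ->
  fterm psi (ins q.+1 (ev v) (A ++ a :: b :: B)) (size A).+1 = (v == b.1)%:R * psi (A ++ a :: b :: B).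
Proof.
move=> h; rewrite ins_catr; last by lia.
have -> : (q.+1 - size A).-1 = 0 by lia.
by rewrite ins0 -cat_rcons -(size_rcons A a) fterm_cat pmul_ev_l ofun_if cat_rcons.
Qed.

Lemma P_iv psi q x A a b B : (q.+1 <= size A)%N ->
  fterm psi (ins q.+1 x (A ++ a :: b :: B)) (size A).+1 =
  fterm (fun s => psi (ins q.+1 x s)) (A ++ a :: b :: B) (size A).
Proof.
move=> h; rewrite ins_catl // -(size_ins q.+1 x A) !fterm_cat.
by apply: eq_ofun => y; rewrite ins_catl.
Qed.

Lemma P_v psi q x a0 R r : (q <= size R)%N ->
  wterm psi (ins q.+1 x (a0 :: R ++ [:: r])) =
  wterm (fun s => psi (ins q.+1 x s)) (a0 :: R ++ [:: r]).
Proof.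
move=> h; rewrite ins_cons ins_catl // !wterm_cons !cats1 !last_rcons.
apply: eq_ofun => y; rewrite !size_rcons /= -!cats1 !take_size_cat //.
Qed.

Lemma P_vi psi v a0 rest :
  wterm psi (ins (size (a0 :: rest)) (ev v) (a0 :: rest)) = (v == a0.1)%:R * psi (a0 :: rest).
Proof.
rewrite ins_end cat_cons wterm_cons cats1 last_rcons size_rcons /= -cats1 take_size_cat //.
by rewrite pmul_ev_l ofun_if.
Qed.


Lemma Pi_t psi p j x t : (j < p)%N -> (p < size t)%N ->
  fterm psi (ins p.+1 x t) j = fterm (fun s => psi (ins p x s)) t j.
Proof.
case: t => [|d t'] hj hp //.
have [A [a [b [B [e hA _ _]]]]] := @decomp2 (d :: t') j d ltac:(lia).
by rewrite e -hA; apply: P_i; lia.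
Qed.

Lemma Pii_t psi p v t d : (p < size t)%N ->
  fterm psi (ins p.+1 (ev v) t) p = (ptgt (nth d t p) == v)%:R * psi t.
Proof.
move=> hp; have [A [a [B [e hA ha]]]] := @decomp1 t p d hp.
by rewrite ha e -hA; apply: P_ii.
Qed.

Lemma Piii_t psi p v t d : (p.+1 < size t)%N ->
  fterm psi (ins p.+1 (ev v) t) p.+1 = (v == (nth d t p.+1).1)%:R * psi t.
Proof.
move=> hp; have [A [a [b [B [e hA ha hb]]]]] := @decomp2 t p d hp.
by rewrite hb e -hA; apply: P_iii.
Qed.

Lemma Piv_t psi p j x t : (p.+1 < j)%N -> (j < size t)%N ->
  fterm psi (ins p.+1 x t) j = fterm (fun s => psi (ins p.+1 x s)) t j.-1.
Proof.
case: j => [|j] // hpj hj; case: t hj => [|d t'] hj //.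
have [A [a [b [B [e hA _ _]]]]] := @decomp2 (d :: t') j d hj.
by rewrite e /= -hA; apply: P_iv; lia.
Qed.

Lemma Pv_t psi p x t : (p.+1 < size t)%N ->
  wterm psi (ins p.+1 x t) = wterm (fun s => psi (ins p.+1 x s)) t.
Proof.
case: t => [|a0 rest] // h; case/lastP: rest h => [|R r] h; first by [].
rewrite -cats1; apply: P_v; move: h; rewrite /= size_rcons; lia.
Qed.

Lemma Pvi_t psi v m t d : size t = m.+1 ->
  wterm psi (ins m.+1 (ev v) t) = (v == (nth d t 0).1)%:R * psi t.
Proof. case: t => [|a0 rest] // h; rewrite -h; exact: P_vi. Qed.

Lemma sgsq p : (-1) ^+ p * (-1) ^+ p = 1 :> CC.
Proof.
elim: p => [|p IH]; first by rewrite expr0 mulr1.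
rewrite exprS; set s := (-1) ^+ p; transitivity (s * s); [ring | exact IH].
Qed.


Lemma alg1 (s c1 i2 c3 w : CC) : s * s = 1 ->
  (-1 * s) * (c1 + s * i2 + c3 + w) = (-1 * s) * c1 - i2 + (-1 * s) * c3 + (-1 * s) * w.
Proof.
move=> h; have -> : (-1 * s) * (c1 + s * i2 + c3 + w) =
  (-1 * s) * c1 - (s * s) * i2 + (-1 * s) * c3 + (-1 * s) * w by ring.
by rewrite h mul1r.
Qed.

Lemma alg2 (s sm C D A B : CC) :
  -1 * (-1 * s) * A + (C + -1 * s * - B) + -1 * s * (-1 * sm * D) + -1 * s * (A + B + sm * D) = C.
Proof. ring. Qed.

Lemma alg3 (p a b c : CC) : p * b - p * c + p * a = p * (a + b + - c).
Proof. ring. Qed.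

Lemma comb5 (a b c d e f z : CC) : a + c + d + e = z -> a - b + c + (d + f) + e = z - b + f.
Proof. by move=> <-; ring. Qed.

Lemma core_v psi v m a0 r : size r = m ->
  \sum_(0 <= p < m.+1) (-1)^+p.+1 * SB psi (ins p.+1 (ev v) (a0 :: r))
  + SB (fun s => \sum_(0 <= q < m) (-1)^+q.+1 * psi (ins q.+1 (ev v) s)) (a0 :: r)
  = psi (a0 :: r) * \sum_(y <- a0 :: r) ((y.1 == v)%:R - (ptgt y == v)%:R).
Proof.
move=> hr.
set t := a0 :: r.
have ht : size t = m.+1 by rewrite /t /= hr.
set x := ev v.
pose F j q := fterm (fun s => psi (ins q.+1 x s)) t j.
pose W q := wterm (fun s => psi (ins q.+1 x s)) t.
pose I2 p := (ptgt (nth a0 t p) == v)%:R * psi t.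
pose I3 p := (v == (nth a0 t p.+1).1)%:R * psi t.
pose I6 := (v == (nth a0 t 0).1)%:R * psi t.
have eHb : SB (fun s => \sum_(0 <= q < m) (-1)^+q.+1 * psi (ins q.+1 x s)) t =
  \sum_(0 <= q < m) (-1)^+q.+1 * (\sum_(0 <= j < q.+1) (-1)^+j * F j q
      + \sum_(q.+1 <= j < m) (-1)^+j * F j q + (-1)^+m * W q).
  rewrite SB_linsum; apply: eq_big_nat => q /andP[_ hq].
  rewrite SB_linscale; congr (_ * _).
  rewrite /t SB_exp; last by rewrite hr; lia.
  rewrite hr -(@big_cat_nat _ _ _ q.+1) //.
have eB : forall p, (p < m.+1)%N -> SB psi (ins p.+1 x t) =
   \sum_(0 <= j < m.+1) (-1)^+j * fterm psi (ins p.+1 x t) j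
   + (-1)^+m.+1 * wterm psi (ins p.+1 x t).
  move=> p hp; rewrite /t ins_cons SB_exp; last by rewrite size_ins.
  by rewrite size_ins hr.
have eC : forall p, (p < m.+1)%N ->
  \sum_(0 <= j < m.+1) (-1)^+j * fterm psi (ins p.+1 x t) j =
  \sum_(0 <= j < p) (-1)^+j * F j p.-1 + (-1)^+p * I2 p +
  (if (p < m)%N then (-1)^+p.+1 * I3 p + \sum_(p.+1 <= j < m) (-1)^+j.+1 * F j p else 0).
  move=> p hp.
  rewrite (@big_cat_nat _ _ _ p) //; last by lia.
  rewrite -!addrA; congr (_ + _).
    apply: eq_big_nat => j /andP[_ hj].
    rewrite Pi_t //; last by rewrite ht.
    by rewrite /F prednK //; lia.
  rewrite big_ltn // (Pii_t _ _ a0) ?ht //; congr (_ + _).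
  case: ltnP => hpm.
    rewrite big_ltn // (Piii_t _ _ a0) ?ht //; congr (_ + _).
    rewrite big_add1; apply: eq_big_nat => j /andP[hj1 hj2].
    rewrite Piv_t //; last by rewrite ht; lia.
  by rewrite big_geq.
have eW : forall p, (p < m.+1)%N -> wterm psi (ins p.+1 x t) = if (p < m)%N then W p else I6.
  move=> p hp; case: ltnP => hpm; first by apply: Pv_t; rewrite ht; lia.
  have -> : p = m by lia.
  exact: (Pvi_t _ _ a0).
have eL : \sum_(0 <= p < m.+1) (-1)^+p.+1 * SB psi (ins p.+1 x t) =
  \sum_(0 <= p < m.+1) (-1)^+p.+1 * (\sum_(0 <= j < p) (-1)^+j * F j p.-1)
  - \sum_(0 <= p < m.+1) I2 p
  + \sum_(0 <= p < m.+1) (-1)^+p.+1 * (if (p < m)%N then (-1)^+p.+1 * I3 p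
        + \sum_(p.+1 <= j < m) (-1)^+j.+1 * F j p else 0)
  + \sum_(0 <= p < m.+1) (-1)^+p.+1 * ((-1)^+m.+1 * (if (p < m)%N then W p else I6)).
  rewrite -sumrN -!big_split; apply: eq_big_nat => p /andP[_ hp].
  rewrite eB // eC // eW // exprS; exact: alg1 (sgsq p).
have S1 : \sum_(0 <= p < m.+1) (-1)^+p.+1 * (\sum_(0 <= j < p) (-1)^+j * F j p.-1) =
  \sum_(0 <= q < m) (-1)^+q.+2 * (\sum_(0 <= j < q.+1) (-1)^+j * F j q).
  by rewrite big_nat_recl // (@big_geq _ _ _ 0 0) // mulr0 add0r.
have S3 : \sum_(0 <= p < m.+1) (-1)^+p.+1 * (if (p < m)%N then (-1)^+p.+1 * I3 p
        + \sum_(p.+1 <= j < m) (-1)^+j.+1 * F j p else 0) =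
  \sum_(0 <= q < m) (I3 q + (-1)^+q.+1 * \sum_(q.+1 <= j < m) (-1)^+j.+1 * F j q).
  rewrite big_nat_recr //= ifN ?ltnn // mulr0 addr0; apply: eq_big_nat => q /andP[_ hq].
  by rewrite hq mulrDr mulrA sgsq mul1r.
have S4 : \sum_(0 <= p < m.+1) (-1)^+p.+1 * ((-1)^+m.+1 * (if (p < m)%N then W p else I6)) =
  \sum_(0 <= q < m) (-1)^+q.+1 * ((-1)^+m.+1 * W q) + I6.
  rewrite big_nat_recr //= ifN ?ltnn // mulrA sgsq mul1r.
  by under eq_big_nat => q /andP[_ hq] do rewrite hq.
rewrite eL S1 S3 S4 eHb.
have comb :
  \sum_(0 <= q < m) (-1)^+q.+2 * (\sum_(0 <= j < q.+1) (-1)^+j * F j q)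
  + \sum_(0 <= q < m) (I3 q + (-1)^+q.+1 * \sum_(q.+1 <= j < m) (-1)^+j.+1 * F j q)
  + \sum_(0 <= q < m) (-1)^+q.+1 * ((-1)^+m.+1 * W q)
  + \sum_(0 <= q < m) (-1)^+q.+1 * (\sum_(0 <= j < q.+1) (-1)^+j * F j q
      + \sum_(q.+1 <= j < m) (-1)^+j * F j q + (-1)^+m * W q)
  = \sum_(0 <= q < m) I3 q.
  rewrite -!big_split; apply: eq_big_nat => q /andP[_ hq] /=.
  rewrite (_ : \sum_(q.+1 <= j < m) (-1)^+j.+1 * F j q = - \sum_(q.+1 <= j < m) (-1)^+j * F j q);
    last by rewrite -sumrN; apply: eq_big_nat => j _; rewrite exprS mulN1r mulNr.
  rewrite !exprS; exact: alg2.
rewrite (@comb5 _ _ _ _ _ _ _ comb).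
have h3 : \sum_(0 <= q < m) I3 q = psi t * \sum_(0 <= q < m) ((nth a0 t q.+1).1 == v)%:R.
  by rewrite mulr_sumr; apply: eq_bigr => q _; rewrite /I3 eq_sym mulrC.
have h2 : \sum_(0 <= p < m.+1) I2 p = psi t * \sum_(0 <= p < m.+1) (ptgt (nth a0 t p) == v)%:R.
  by rewrite mulr_sumr; apply: eq_bigr => p _; rewrite /I2 mulrC.
have h6 : I6 = psi t * ((nth a0 t 0).1 == v)%:R by rewrite /I6 eq_sym mulrC.
rewrite h3 h2 h6 (big_nth a0) ht big_split sumrN big_nat_recl //.
rewrite /=; exact: alg3.
Qed.


Definition Hc (lam : 'I_n -> CC) (m : nat) (X : chain) : chain :=
  flatten [seq flatten [seq [seq ((-1)^+p.+1 * lam v * y.1, ins p.+1 (ev v) y.2) | y <- X]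
     | v <- enum 'I_n] | p <- index_iota 0 m].
Definition HH (lam : 'I_n -> CC) m psi s :=
  \sum_(0 <= p < m) \sum_(v <- enum 'I_n) (-1)^+p.+1 * lam v * psi (ins p.+1 (ev v) s).

Lemma pair_H lam m X psi : pair (Hc lam m X) psi = pair X (HH lam m psi).
Proof.
rewrite /Hc pair_flatten /HH pair_linsum; apply: eq_bigr => p _.
rewrite pair_flatten pair_linsum; apply: eq_bigr => v _.
rewrite pair_map /pair; apply: eq_bigr => y _ /=.
by rewrite mulrCA mulrA.
Qed.

Lemma HH_alt lam m psi s : HH lam m psi s =
  \sum_(v <- enum 'I_n) lam v * \sum_(0 <= p < m) (-1)^+p.+1 * psi (ins p.+1 (ev v) s).
Proof.
rewrite /HH exchange_big; apply: eq_bigr => v _; rewrite mulr_sumr.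
by apply: eq_bigr => p _; rewrite -mulrA mulrCA.
Qed.

Lemma core lam m t psi : size t = m.+1 ->
  HH lam m.+1 (SB psi) t + SB (HH lam m psi) t =
  psi t * \sum_(y <- t) (lam y.1 - lam (ptgt y)).
Proof.
case: t => [|a0 r] // ht; have hr : size r = m by case: ht.
rewrite HH_alt.
have -> : SB (HH lam m psi) (a0 :: r) =
   \sum_(v <- enum 'I_n) lam v *
     SB (fun s => \sum_(0 <= q < m) (-1)^+q.+1 * psi (ins q.+1 (ev v) s)) (a0 :: r).
  rewrite /SB; under eq_bigr => v _ do rewrite -pair_linscale.
  by rewrite -pair_linsum; apply: eq_pair => y _; rewrite HH_alt.
rewrite -big_split.
have -> : \sum_(v <- enum 'I_n) (lam v *
      \sum_(0 <= p < m.+1) (-1) ^+ p.+1 * SB psi (ins p.+1 (ev v) (a0 :: r)) +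
      lam v * SB (fun s => \sum_(0 <= q < m) (-1) ^+ q.+1 * psi (ins q.+1 (ev v) s)) (a0 :: r))
  = \sum_(v <- enum 'I_n) lam v * (psi (a0 :: r) *
      \sum_(y <- a0 :: r) ((y.1 == v)%:R - (ptgt y == v)%:R)).
  by apply: eq_bigr => v _; rewrite -mulrDr core_v.
rewrite (eq_bigr (fun v => psi (a0 :: r) * \sum_(y <- a0 :: r)
     lam v * ((y.1 == v)%:R - (ptgt y == v)%:R))); last first.
  by move=> v _; rewrite mulrCA; congr (_ * _); rewrite mulr_sumr.
rewrite -mulr_sumr; congr (_ * _); rewrite exchange_big; apply: eq_bigr => y _.
rewrite (eq_bigr (fun v => (y.1 == v)%:R * lam v - (ptgt y == v)%:R * lam v)); last first.
  by move=> v _; rewrite mulrBr !(mulrC (lam v)).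
by rewrite big_split sumrN !sum_delta ?enum_uniq ?mem_enum.
Qed.


Lemma half2 : (2^-1 : CC) + 2^-1 = 1.
Proof. by field. Qed.

Lemma oneh : (1 : CC) - 2^-1 = 2^-1.
Proof. by apply/eqP; rewrite subr_eq half2. Qed.

Lemma lemE (s c k : nat) :
  ((s%:R - 2^-1) + (c%:R - k%:R / 2) = (s + c)%:R - (k.+1)%:R / 2 :> CC).
Proof. rewrite natrD -addn1 natrD; ring. Qed.

Lemma lemF (a b c d : nat) :
  ((a%:R - b%:R / 2) + (c%:R - d%:R / 2) = (a + c)%:R - (b + d)%:R / 2 :> CC).
Proof. rewrite !natrD; ring. Qed.

Lemma lemSplit (x y z : CC) : x - z = (x - y) + (y - z).
Proof. ring. Qed.

Lemma valid_delta (lam : 'I_n -> CC) (hlam : forall a, lam (tgt a) = lam (src a) + 2^-1)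
  (p : dpath) : valid_path src tgt p ->
  lam p.1 - lam (ptgt p) = (pstar p)%:R - (plen p)%:R / 2.
Proof.
case: p => u l; rewrite /valid_path /Defs.ptgt /pstar /plen /=.
elim: l u => [|y l IH] u /=.
  by move=> _; rewrite subrr mul0r subr0.
case/andP => /eqP hy hc; rewrite -hy.
have hd : lam (dsrc src tgt y) - lam (dtgt src tgt y) = (is_star y)%:R - 2^-1.
  case: y {hy hc} => a; rewrite /dsrc /dtgt /is_star hlam.
    by rewrite opprD addrA subrr add0r /=.
  by rewrite addrC addKr /= oneh.
have := IH _ hc; rewrite /Defs.ptgt /= => h.
by rewrite (lemSplit _ (lam (dtgt src tgt y))) hd h lemE.
Qed.

Lemma sum_delta_valid (lam : 'I_n -> CC) (hlam : forall a, lam (tgt a) = lam (src a) + 2^-1)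
  (s : seq dpath) : all (valid_path src tgt) s ->
  \sum_(y <- s) (lam y.1 - lam (ptgt y)) =
  (\sum_(y <- s) pstar y)%:R - (key_deg s)%:R / 2.
Proof.
rewrite /key_deg; elim: s => [|y s IH]; first by move=> _; rewrite !big_nil mul0r subr0.
move=> /andP[hy hs]; rewrite !big_cons (valid_delta hlam hy) IH //; exact: lemF.
Qed.

Lemma all_ins (P : pred dpath) q x l : all P (ins q x l) = P x && all P l.
Proof. by rewrite /ins all_cat /= andbCA -all_cat cat_take_drop. Qed.

Lemma ins_comm1 q j x w (l : seq dpath) : (j <= q)%N -> (q <= size l)%N ->
  ins q.+1 x (ins j w l) = ins j w (ins q x l).
Proof.
elim: l q j => [|a l IH] q [|j] //= hj hq; rewrite ?ins0 //.
  by case: q hj hq.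
case: q hj hq => [|q] // hj hq.
by rewrite !ins_cons IH.
Qed.

Lemma ins_comm2 q j x w (l : seq dpath) : (q <= j)%N -> (j <= size l)%N ->
  ins q x (ins j w l) = ins j.+1 w (ins q x l).
Proof.
elim: l q j => [|a l IH] [|q] j //= hq hj; rewrite ?ins0 //.
  by case: j hq hj.
case: j hq hj => [|j] // hq hj.
by rewrite !ins_cons IH.
Qed.

Definition newgen (lam : 'I_n -> CC) (p : nat) (v : 'I_n) (g : gen n Arr) : gen n Arr :=
  let: (k, j, others, u, w) := g in
  ((-1)^+p.+1 * lam v * k, if (p.+1 <= j)%N then j.+1 else j,
   if (p.+1 <= j)%N then ins p.+1 (ev v) others else ins p (ev v) others, u, w).

Lemma gen_H lam i p v g : valid_gen src tgt i g -> (p < i)%N ->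
  gen_chain src tgt (newgen lam p v g) =
  [seq ((-1)^+p.+1 * lam v * y.1, ins p.+1 (ev v) y.2) | y <- gen_chain src tgt g].
Proof.
case: g => [[[[k j] o] u] w] /= /and5P[hj /eqP ho _ _ _] hp.
rewrite -map_comp; apply: eq_map => y /=; congr (_, _); first by rewrite mulrA.
case: ifP => hpj.
  by rewrite (ins_comm2 (ev v) y.2 hpj) // ho; lia.
by rewrite (ins_comm1 (ev v) y.2) ?ho //; lia.
Qed.

Lemma gen_valid lam i p v g : valid_gen src tgt i g -> (p < i)%N ->
  valid_gen src tgt i.+1 (newgen lam p v g).
Proof.
case: g => [[[[k j] o] u] w] /= /and5P[hj /eqP ho ha hu hw] hp.
apply/and5P; split => //.
- by case: ifP => _; lia.
- by case: ifP => _; rewrite size_ins ho; apply/eqP; lia.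
- by case: ifP => _; rewrite all_ins ha.
Qed.


Lemma pair_lieD X psi :
  pair (lieD X) psi = pair X (fun s => (\sum_(p <- s) pstar p)%:R * psi s).
Proof.
rewrite /lieD pair_map /pair; apply: eq_bigr => x _; cbn [fst snd].
by rewrite -mulrA mulrCA.
Qed.

Lemma pair_linsub f g X : pair X (fun s => f s - g s) = pair X f - pair X g.
Proof.
rewrite /pair -sumrN -big_split; apply: eq_bigr => x _.
by rewrite mulrBr.
Qed.

Lemma pair_Hgen lam i g psi : valid_gen src tgt i g ->
  pair (Hc lam i (gen_chain src tgt g)) psi =
  \sum_(p <- index_iota 0 i) \sum_(v <- enum 'I_n) pair (gen_chain src tgt (newgen lam p v g)) psi.
Proof.
move=> hg; rewrite /Hc pair_flatten; apply: eq_big_seq => p.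
rewrite mem_index_iota => /andP[_ hp]; rewrite pair_flatten.
by apply: eq_bigr => v _; rewrite (gen_H _ _ hg hp).
Qed.

Lemma lemG (A B P S D : CC) : A + B = P * (S - D) -> B = S * P - D * P - A.
Proof. move=> h; rewrite (_ : B = A + B - A); last by ring. rewrite h; ring. Qed.

Lemma main_sec (lam : 'I_n -> CC) (hlam : forall a, lam (tgt a) = lam (src a) + 2^-1)
  (i d : nat) (c : chain) :
  valid_chain src tgt i.+1 c -> homogeneous d c -> inJ src tgt i (hoch_b c) ->
  exists c' : chain, valid_chain src tgt i.+2 c' /\
    inJ src tgt i.+1 (chain_sub (chain_sub (lieD c) (chain_scale (d%:R / 2%:R) c)) (hoch_b c')).
Proof.
move=> hv hh [G [hG hco]].
exists (Hc lam i.+1 c); split.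
  apply/allP => z /flattenP [zs /mapP [p _ ->] /flattenP [zs' /mapP [v _ ->] /mapP [y yc ->]]].
  have /andP[/eqP hs ha] := allP hv y yc.
  by rewrite /= size_ins hs eqxx all_ins ha.
exists (flatten [seq flatten [seq [seq newgen lam p v g | v <- enum 'I_n]
   | p <- index_iota 0 i] | g <- G]).
split.
  apply/allP => g' /flattenP [zs /mapP [g gG ->] /flattenP [zs' /mapP [p pin ->] /mapP [v _ ->]]].
  apply: gen_valid; first exact: (allP hG).
  by move: pin; rewrite mem_index_iota.
move=> key; rewrite !coeff_pair; set psi := fun s => _.
rewrite !pair_sub pair_scale pair_hoch pair_H pair_lieD.
have e1 : pair c (SB (HH lam i psi)) =
   pair c (fun s => (\sum_(p <- s) pstar p)%:R * psi s) - d%:R / 2%:R * pair c psi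
   - pair c (HH lam i.+1 (SB psi)).
  rewrite -pair_linscale -!pair_linsub; apply: eq_pair => x xc.
  have /andP[/eqP hs ha] := allP hv x xc.
  have hd := allP hh x xc.
  have := core lam psi hs; rewrite (sum_delta_valid hlam ha) (eqP hd).
  exact: lemG.
rewrite -e1 -pair_hoch (pair_coeff _ hco) !pair_flatten big_flatten big_map.
apply: eq_big_seq => g gG.
rewrite -pair_H (pair_Hgen _ _ (allP hG g gG)) big_flatten big_map.
by apply: eq_bigr => p _; rewrite big_map.
Qed.


Definition fwdn (tau : 'I_n -> 'I_n) (i j : nat) : bool :=
  [exists a : Arr, (tau (src a) == i :> nat) && (tau (tgt a) == j :> nat)].
Definition eps tau i j : CC := if fwdn tau i j then 2^-1 else - 2^-1.
Fixpoint mu0 tau k : CC := if k is k'.+1 then mu0 tau k' + eps tau k' k'.+1 else 0.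
Definition ppt ty := if ty is TypeD then (n - 3)%N else 2%N.
Definition mu ty tau k :=
  if ty is TypeA then mu0 tau k
  else if k == n.-1 then mu0 tau (ppt ty) + eps tau (ppt ty) n.-1 else mu0 tau k.

Lemma lemK (x e : CC) : x + e - x = e.
Proof. by rewrite addrC addKr. Qed.

Lemma edge_mu ty tau (i j : nat) : dynkin_ok ty n -> (i < n)%N -> (j < n)%N ->
  dynkin_edge0 ty n i j -> mu ty tau j - mu ty tau i = eps tau i j.
Proof.
case: ty => /= hok hi hj.
- by move/eqP => ->; rewrite lemK.
- case/orP => [/andP[/eqP hj1 hj2] | /andP[/eqP hi1 /eqP hj1]].
    rewrite hj1.
    have /negbTE -> : (i.+1 != n.-1) by lia.
    have /negbTE -> : (i != n.-1) by lia.
    by rewrite /= lemK.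
  rewrite hi1 hj1 subn1 eqxx.
  have /negbTE -> : ((n - 3)%N != n.-1) by lia.
  by rewrite lemK.
- case/orP => [/andP[/eqP hj1 hj2] | /andP[/eqP hi1 /eqP hj1]].
    rewrite hj1.
    have /negbTE -> : (i.+1 != n.-1) by lia.
    have /negbTE -> : (i != n.-1) by lia.
    by rewrite /= lemK.
  rewrite hi1 hj1 subn1 eqxx.
  have /negbTE -> : (2 != n.-1)%N by lia.
  by rewrite lemK.
Qed.

Lemma edge_noloop ty (i : nat) : dynkin_ok ty n -> dynkin_edge0 ty n i i = false.
Proof. case: ty => /= hok; apply/negbTE; lia. Qed.

Lemma exists_lam : is_ADE_quiver src tgt ->
  exists lam : 'I_n -> CC, forall a, lam (tgt a) = lam (src a) + 2^-1.
Proof.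
case=> ty [sigma [hok [tau st ts] hnar]].
exists (fun x => mu ty tau (tau x)) => a.
set i := tau (src a); set j := tau (tgt a).
have si : sigma i = src a by rewrite /i ts.
have sj : sigma j = tgt a by rewrite /j ts.
have hedge : dynkin_edge ty i j.
  have := hnar i j; rewrite si sj => h.
  have : (0 < narrows src tgt (src a) (tgt a))%N.
    by apply/card_gt0P; exists a; rewrite inE !eqxx.
  by rewrite h; case: (dynkin_edge ty i j).
have hle : (narrows src tgt (src a) (tgt a) <= 1)%N.
  by rewrite -si -sj hnar; case: (dynkin_edge ty i j).
suff h : mu ty tau j - mu ty tau i = 2^-1 by rewrite -h addrC subrK.
case/orP: hedge => he.
  rewrite (edge_mu tau hok (ltn_ord i) (ltn_ord j) he) /eps.
  have -> : fwdn tau i j by apply/existsP; exists a; rewrite !eqxx.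
  by [].
have := edge_mu tau hok (ltn_ord j) (ltn_ord i) he.
have nf : fwdn tau j i = false.
  apply/negbTE/negP => /existsP [b /andP [/eqP hb1 /eqP hb2]].
  have e1 : src b = tgt a by rewrite -sj -(ord_inj hb1) ts.
  have e2 : tgt b = src a by rewrite -si -(ord_inj hb2) ts.
  case: (eqVneq a b) => [eab | nab].
    subst b; have eij : i = j by rewrite /i /j e1.
    by move: he; rewrite eij edge_noloop.
  have : (2 <= narrows src tgt (src a) (tgt a))%N.
    rewrite /narrows (_ : 2%N = #|[set a; b]|); last by rewrite cards2 nab.
    apply: subset_leq_card; apply/subsetP => z; rewrite !inE.
    by case/orP => /eqP ->; rewrite ?e1 ?e2 !eqxx ?orbT.
  by move=> h2; move: (leq_trans h2 hle).
rewrite /eps nf => h.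
by rewrite -opprB h opprK.
Qed.

End Work.

Unset Implicit Arguments.
Set Strict Implicit.

Theorem mainTheorem1 (n : nat) (Arr : finType) (src tgt : Arr -> 'I_n) :
  is_ADE_quiver src tgt ->
  forall (i d : nat) (c : chain n Arr),
    valid_chain src tgt i.+1 c ->
    homogeneous d c ->
    inJ src tgt i (hoch_b src tgt c) ->
    exists c' : chain n Arr,
      valid_chain src tgt i.+2 c' /\
      inJ src tgt i.+1
        (chain_sub (chain_sub (lieD c) (chain_scale (d%:R / 2%:R) c))
                   (hoch_b src tgt c')).
Proof.
move=> hq i d c hv hh hJ.
have [lam hlam] := exists_lam hq.
exact: (main_sec hlam hv hh hJ).
Qed.
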